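(* Let $\mathcal{H}$ be a separable Hilbert space and let $\{f_n\}_{n=1}^\infty$ be a pseudo-Riesz sequence (respectively a pseudo-frame, respectively a pseudo-Riesz basis) for $\mathcal{H}$, with synthesis operator $S_f:\ell^2(\mathbb{N})\to\mathcal{H}$, $S_f(c)=\sum_nc_nf_n$, and let $$\gamma=\inf_{c\notin\mathcal{N}_{S_f}}\frac{\|S_fc\|}{d(c,\mathcal{N}_{S_f})}>0,$$ where $\mathcal{N}_{S_f}$ is the nullspace of $S_f$ and $d(c,\mathcal{N}_{S_f})=\inf\{\|c-e\|:e\in\mathcal{N}_{S_f}\}$. If $\{g_n\}_{n=1}^\infty$ is a sequence in $\mathcal{H}$ with $\sum_{n=1}^\infty\|f_n-g_n\|^2<\gamma^2$, then $\{g_n\}$ is also a pseudo-Riesz sequence (respectively a pseudo-frame, respectively a pseudo-Riesz basis) for $\mathcal{H}$.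
   Context: A Bessel sequence is a pseudo-Riesz sequence if it becomes a Riesz sequence after removing finitely many appropriate vectors from it. A Bessel sequence is a pseudo-frame if it becomes a frame for $\mathcal{H}$ after adding finitely many appropriate vectors to it. A Bessel sequence $\{f_n\}$ is a pseudo-Riesz basis if there are a finite set $\sigma\subseteq\mathbb{N}$ and finitely many vectors $h_1,\dots,h_m\in\mathcal{H}$ such that $\{f_n\}_{n\notin\sigma}\cup\{h_1,\dots,h_m\}$ is a Riesz basis for $\mathcal{H}$. *)

(* Defs.v *)
From HB Require Import structures.
From mathcomp Require Import all_boot all_order all_algebra.
From mathcomp Require Import all_classical all_reals.
From mathcomp Require Import ereal topology normedtype sequences.
From mathcomp Require Import complex.

Set Implicit Arguments.
Unset Strict Implicit.
Unset Printing Implicit Defensive.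

Import Order.TTheory GRing.Theory Num.Theory.
Import numFieldNormedType.Exports.
Local Open Scope ring_scope.
Local Open Scope classical_set_scope.

Section HilbertDefs.
Variable R : realType.
Local Notation C := R[i].
Variable V : lmodType C.
Variable ip : V -> V -> C.   (* inner product <x, y>, linear in x *)

Definition hnorm (x : V) : R := Num.sqrt (complex.Re (ip x x)).

Definition separable_hilbert : Prop :=
  [/\ (forall (a : C) (x y z : V), ip (a *: x + y) z = a * ip x z + ip y z),
      (forall x y : V, ip y x = conjc (ip x y)),
      (forall x : V, 0 <= complex.Re (ip x x)),
      (forall x : V, ip x x = 0 -> x = 0)
    &
      (forall u : nat -> V,
          (forall e : R, 0 < e -> exists N : nat, forall m n : nat,
               (N <= m)%N -> (N <= n)%N -> hnorm (u m - u n) < e) ->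
          exists l : V, (fun n => hnorm (u n - l)) @ \oo --> (0 : R))]
  /\
      (exists d : nat -> V, forall (x : V) (e : R), 0 < e ->
          exists n : nat, hnorm (x - d n) < e).

Definition has_sum (u : nat -> V) (s : V) : Prop :=
  (fun N => hnorm (\sum_(i < N) u i - s)) @ \oo --> (0 : R).

Definition l2sq (c : nat -> C) : \bar R :=
  (\sum_(n <oo) ((ComplexField.Normc.normc (c n)) ^+ 2)%:E)%E.

Definition in_l2 (c : nat -> C) : Prop := (l2sq c < +oo)%E.

Definition l2norm (c : nat -> C) : R := Num.sqrt (fine (l2sq c)).

(* Families are given as (w : nat -> V) together with an index predicate
   P : pred nat: the family is {w n}_{n : P n}. *)

Definition bessel (f : nat -> V) : Prop :=
  exists B : R, 0 < B /\ forall x : V,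
    (\sum_(n <oo) ((ComplexField.Normc.normc (ip x (f n))) ^+ 2)%:E <= (B * hnorm x ^+ 2)%:E)%E.

Definition riesz_seq (w : nat -> V) (P : pred nat) : Prop :=
  exists A B : R, [/\ 0 < A, 0 < B & forall (N : nat) (c : nat -> C),
    let s2 := \sum_(i < N | P i) ComplexField.Normc.normc (c i) ^+ 2 in
    let v := \sum_(i < N | P i) c i *: w i in
    A * s2 <= hnorm v ^+ 2 /\ hnorm v ^+ 2 <= B * s2].

Definition complete_family (w : nat -> V) (P : pred nat) : Prop :=
  forall (x : V) (e : R), 0 < e -> exists (N : nat) (c : nat -> C),
    hnorm (x - \sum_(i < N | P i) c i *: w i) < e.

Definition riesz_basis (w : nat -> V) (P : pred nat) : Prop :=
  riesz_seq w P /\ complete_family w P.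

Definition frame (w : nat -> V) (P : pred nat) : Prop :=
  exists A B : R, [/\ 0 < A, 0 < B & forall x : V,
    ((A * hnorm x ^+ 2)%:E <= \sum_(n <oo | P n) ((ComplexField.Normc.normc (ip x (w n))) ^+ 2)%:E)%E
    /\ (\sum_(n <oo | P n) ((ComplexField.Normc.normc (ip x (w n))) ^+ 2)%:E <= (B * hnorm x ^+ 2)%:E)%E].

Definition prepend (hs : seq V) (f : nat -> V) : nat -> V :=
  fun n => if (n < size hs)%N then nth 0 hs n else f (n - size hs)%N.

Definition pseudo_riesz_seq (f : nat -> V) : Prop :=
  bessel f /\ exists sigma : seq nat, riesz_seq f (fun n => n \notin sigma).

Definition pseudo_frame (f : nat -> V) : Prop :=
  bessel f /\ exists hs : seq V, frame (prepend hs f) predT.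

Definition pseudo_riesz_basis (f : nat -> V) : Prop :=
  bessel f /\ exists (sigma : seq nat) (hs : seq V),
    riesz_basis (prepend hs f)
      (fun n => (n < size hs)%N || ((n - size hs)%N \notin sigma)).

Definition synth_null (f : nat -> V) : set (nat -> C) :=
  [set c | in_l2 c /\ has_sum (fun n => c n *: f n) 0].

Definition dist_null (f : nat -> V) (c : nat -> C) : R :=
  inf [set l2norm (fun n => c n - e n) | e in synth_null f].

(* gamma = inf_{c \in l^2 \ N_{S_f}} ||S_f c|| / d(c, N_{S_f})
   (an extended real; the infimum of the empty set is +oo) *)
Definition gamma_f (f : nat -> V) : \bar R :=
  ereal_inf [set r | exists (c : nat -> C) (s : V),
    [/\ in_l2 c, ~ synth_null f c, has_sum (fun n => c n *: f n) s
      & r = (hnorm s / dist_null f c)%:E]].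

End HilbertDefs.

(* Main.v *)
Require Import Defs.
From HB Require Import structures.
From mathcomp Require Import all_boot all_order all_algebra.
From mathcomp Require Import all_classical all_reals.
From mathcomp Require Import ereal topology normedtype sequences.
From mathcomp Require Import complex.
From mathcomp Require Import lra ring zify.
Import Order.TTheory GRing.Theory Num.Theory.
Import numFieldNormedType.Exports.
Local Open Scope ring_scope.


Lemma realCS (R : realType) (I : eqType) (s : seq I) (P : pred I) (a b : I -> R) :
  (\sum_(i <- s | P i) a i * b i) ^+ 2 <=
  (\sum_(i <- s | P i) a i ^+ 2) * (\sum_(i <- s | P i) b i ^+ 2).
Proof.
set A := \sum_(i <- s | P i) a i ^+ 2.
set B := \sum_(i <- s | P i) b i ^+ 2.
set D := \sum_(i <- s | P i) a i * b i.
have E : \sum_(i <- s | P i) (A * b i - D * a i) ^+ 2 = A * (A * B - D ^+ 2).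
  transitivity (\sum_(i <- s | P i) (A ^+ 2 * b i ^+ 2 - (2 * A * D) * (a i * b i)
      + D ^+ 2 * a i ^+ 2)).
    by apply: eq_bigr => i _; ring.
  rewrite big_split sumrB /= -!mulr_sumr -/A -/B -/D; ring.
have H0 : 0 <= A * (A * B - D ^+ 2) by rewrite -E sumr_ge0 // => i _; apply: sqr_ge0.
have A0 : 0 <= A by rewrite sumr_ge0 // => i _; apply: sqr_ge0.
have B0 : 0 <= B by rewrite sumr_ge0 // => i _; apply: sqr_ge0.
have [Ap|] := ltrP 0 A; first by nra.
move=> Ale; have Aeq : A = 0 by apply/eqP; rewrite eq_le Ale A0.
have : (A == 0) by rewrite Aeq.
rewrite /A psumr_eq0; last by move=> i _; apply: sqr_ge0.
move=> /allP al.
have -> : D = 0.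
  rewrite /D big_seq_cond big1 // => i /andP[si Pi].
  by have := al i si; rewrite Pi /= sqrf_eq0 => /eqP ->; rewrite mul0r.
by rewrite expr0n /= mulr_ge0.
Qed.

Lemma sq_le (R : realType) (a b : R) : 0 <= a -> a <= b -> a ^+ 2 <= b ^+ 2.
Proof. move=> *; nra. Qed.
Lemma sq_lt_inv (R : realType) (a e : R) : 0 <= a -> 0 < e -> a ^+ 2 < e ^+ 2 -> a < e.
Proof. move=> *; nra. Qed.

Lemma geo_small (R : realType) (X e : R) : 0 <= X -> 0 < e ->
  exists k : nat, (3 / 4) ^+ k * X < e.
Proof.
move=> X0 e0.
have bnd : forall k : nat, (3 / 4 : R) ^+ k <= 3 / (k%:R + 3).
  elim=> [|k IH]; first by rewrite expr0 add0r divff.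
  rewrite exprS.
  have k0 : 0 <= (k%:R : R) by [].
  apply: le_trans (ler_wpM2l _ IH) _; first by lra.
  have -> : (k.+1%:R : R) = k%:R + 1 by rewrite -addn1 natrD.
  rewrite ler_pdivlMr; last by lra.
  have -> : 3 / 4 * (3 / (k%:R + 3)) * (k%:R + 1 + 3) = (9 * (k%:R + 4)) / (4 * (k%:R + 3)) :> R.
    by field; lra.
  rewrite ler_pdivrMr; last by lra.
  lra.
set k := Num.Def.archi_bound (3 * X / e).
have hk : 3 * X / e < k%:R by apply: archi_boundP; rewrite divr_ge0 // ?mulr_ge0 //; lra.
rewrite ltr_pdivrMr // in hk.
exists k.
apply: le_lt_trans (ler_wpM2r X0 (bnd k)) _.
have k0 : 0 <= (k%:R : R) by [].
rewrite mulrAC ltr_pdivrMr; last by lra.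
nra.
Qed.
Arguments sq_le {R a b}.
Arguments sq_lt_inv {R a e}.
Arguments realCS {R}.
Arguments geo_small {R}.

Lemma tail_small (R : realType) (u : nat -> R) : (forall n, 0 <= u n) ->
  (\sum_(n <oo) (u n)%:E < +oo)%E -> forall e : R, 0 < e ->
  exists M : nat, forall M', (M <= M')%N -> (\sum_(M' <= n <oo) (u n)%:E <= e%:E)%E.
Proof.
move=> u0 fin e e0.
have := @nneseries_tail_cvg R (fun n => (u n)%:E) xpredT fin (fun k _ => u0 k).
move/fine_cvgP => [Hfin Hcv].
have Hlt := @cvgr_lt R nat _ _ _ 0 Hcv e e0.
have {}Hlt := Hlt eventually_filter.
have : \forall t \near \oo%classic, (\sum_(t <= n <oo | xpredT n) (u n)%:E <= e%:E)%E.
  near=> t.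
  have h1 : (\sum_(t <= n <oo) (u n)%:E)%E \is a fin_num by near: t.
  have h2 : fine (\sum_(t <= n <oo) (u n)%:E)%E < e by near: t.
  by rewrite -(fineK h1) lee_fin ltW.
case=> M _ HM; exists M => M' hM; exact: (HM M' hM).
Unshelve. all: by end_near.
Qed.

Lemma tail_fin (R : realType) (u : nat -> R) (M : nat) (e : R) : (forall n, 0 <= u n) ->
  (\sum_(M <= n <oo) (u n)%:E <= e%:E)%E -> forall N, \sum_(M <= n < N) u n <= e.
Proof.
move=> u0 h N; rewrite -lee_fin; apply: le_trans h.
rewrite -sumEFin; apply: nneseries_lim_ge => n _ _; exact: u0.
Qed.
Arguments tail_small {R u}.
Arguments tail_fin {R u M e}.

Lemma mask_sum (M : zmodType) (T : Type) (N : nat) (P P' : pred nat) (F : nat -> T -> M)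
    (c : nat -> T) (z : T) :
  (forall i, P' i -> P i) -> (forall i, F i z = 0) ->
  \sum_(i < N | P i) F i (if P' i then c i else z) = \sum_(i < N | P' i) F i (c i).
Proof.
move=> PP F0; rewrite [LHS]big_mkcond [RHS]big_mkcond; apply: eq_bigr => i _.
case h' : (P' i); first by rewrite (PP _ h').
by case: (P i); rewrite ?F0.
Qed.

Lemma sub_sum (R : realType) (N : nat) (P Q : pred nat) (F : nat -> R) :
  (forall i, 0 <= F i) -> (forall i, P i -> Q i) ->
  \sum_(i < N | P i) F i <= \sum_(i < N | Q i) F i.
Proof.
move=> F0 PQ; rewrite [X in X <= _]big_mkcond [X in _ <= X]big_mkcond.
apply: ler_sum => i _; case h : (P i); first by rewrite (PQ _ h).
by case: (Q i).
Qed.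
Arguments mask_sum {M T}.
Arguments sub_sum {R}.

Section Basics.
Variable R : realType.
Local Notation C := R[i].
Variable V : lmodType C.
Variable ip : V -> V -> C.
Hypothesis ipl : forall (a : C) (x y z : V), ip (a *: x + y) z = a * ip x z + ip y z.
Hypothesis ipc : forall x y : V, ip y x = conjc (ip x y).
Hypothesis ipp : forall x : V, 0 <= complex.Re (ip x x).
Hypothesis ipd : forall x : V, ip x x = 0 -> x = 0.

Local Notation hn := (hnorm ip).
Local Notation nc := (@ComplexField.Normc.normc R).

Lemma JD (a b : C) : conjc (a + b) = conjc a + conjc b.
Proof. by case: a b => [? ?] [? ?]; rewrite /= opprD. Qed.
Lemma JN (a : C) : conjc (- a) = - conjc a.
Proof. by case: a. Qed.
Lemma JM (a b : C) : conjc (a * b) = conjc a * conjc b.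
Proof. by case: a b => [p q] [r t]; rewrite /=; congr Complex; ring. Qed.

Lemma ip0l z : ip 0 z = 0.
Proof.
have h := ipl 1 0 0 z; rewrite scaler0 addr0 mul1r in h.
by move: h => /(congr1 (fun t => t - ip 0 z)); rewrite addrK subrr.
Qed.

Lemma ipDl x y z : ip (x + y) z = ip x z + ip y z.
Proof. by rewrite -[x in LHS]scale1r ipl mul1r. Qed.
Lemma ipZl a x z : ip (a *: x) z = a * ip x z.
Proof. by rewrite -[a *: x]addr0 ipl ip0l addr0. Qed.
Lemma ipNl x z : ip (- x) z = - ip x z.
Proof. by rewrite -scaleN1r ipZl mulN1r. Qed.
Lemma ipBl x y z : ip (x - y) z = ip x z - ip y z.
Proof. by rewrite ipDl ipNl. Qed.
Lemma ipDr z x y : ip z (x + y) = ip z x + ip z y.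
Proof. by rewrite ipc ipDl JD -!ipc. Qed.
Lemma ipZr z a x : ip z (a *: x) = conjc a * ip z x.
Proof. by rewrite ipc ipZl JM -ipc. Qed.
Lemma ipNr z x : ip z (- x) = - ip z x.
Proof. by rewrite ipc ipNl JN -ipc. Qed.
Lemma ipBr z x y : ip z (x - y) = ip z x - ip z y.
Proof. by rewrite ipDr ipNr. Qed.
Lemma ip0r z : ip z 0 = 0.
Proof. by rewrite ipc ip0l /= oppr0. Qed.

Lemma ReD (a b : C) : complex.Re (a + b) = complex.Re a + complex.Re b.
Proof. by case: a b => [? ?] [? ?]. Qed.
Lemma ImD (a b : C) : complex.Im (a + b) = complex.Im a + complex.Im b.
Proof. by case: a b => [? ?] [? ?]. Qed.
Lemma ReN (a : C) : complex.Re (- a) = - complex.Re a.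
Proof. by case: a. Qed.
Lemma ImN (a : C) : complex.Im (- a) = - complex.Im a.
Proof. by case: a. Qed.
Lemma ReJ (a : C) : complex.Re (conjc a) = complex.Re a.
Proof. by case: a. Qed.
Lemma ImJ (a : C) : complex.Im (conjc a) = - complex.Im a.
Proof. by case: a. Qed.
Lemma ReM (a b : C) : complex.Re (a * b) = complex.Re a * complex.Re b - complex.Im a * complex.Im b.
Proof. by case: a b => [? ?] [? ?]. Qed.
Lemma ImM (a b : C) : complex.Im (a * b) = complex.Re a * complex.Im b + complex.Im a * complex.Re b.
Proof. by case: a b => [? ?] [? ?]. Qed.

Lemma nc_ge0 (z : C) : 0 <= nc z.
Proof. by case: z => a b; rewrite /= sqrtr_ge0. Qed.
Lemma nc2 (z : C) : nc z ^+ 2 = complex.Re z ^+ 2 + complex.Im z ^+ 2.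
Proof. by case: z => a b; rewrite /= sqr_sqrtr // addr_ge0 ?sqr_ge0. Qed.
Lemma ncJ (z : C) : nc (conjc z) = nc z.
Proof. by case: z => a b; rewrite /= sqrrN. Qed.
Lemma ncN (z : C) : nc (- z) = nc z.
Proof. by case: z => a b; rewrite /= !sqrrN. Qed.

Lemma Im_ipxx x : complex.Im (ip x x) = 0.
Proof.
have := ipc x x; case: (ip x x) => a b [] /= h.
lra.
Qed.

Lemma hn_ge0 x : 0 <= hn x.
Proof. by rewrite /hnorm sqrtr_ge0. Qed.
Lemma hn2 x : hn x ^+ 2 = complex.Re (ip x x).
Proof. by rewrite /hnorm sqr_sqrtr. Qed.

Lemma hn0 : hn 0 = 0.
Proof. by rewrite /hnorm ip0l /= sqrtr0. Qed.

Lemma hn_eq0 x : hn x = 0 -> x = 0.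
Proof.
move=> h; apply: ipd; have h2 : complex.Re (ip x x) = 0 by rewrite -hn2 h expr0n.
have h3 := Im_ipxx x; case: (ip x x) h2 h3 => a b /= -> -> //.
Qed.

Lemma hnD2 x y : hn (x + y) ^+ 2 = hn x ^+ 2 + hn y ^+ 2 + 2 * complex.Re (ip x y).
Proof.
rewrite !hn2 ipDl !ipDr !ReD (ipc x y) ReJ; ring.
Qed.
Lemma hnN x : hn (- x) = hn x.
Proof. by rewrite /hnorm ipNl ipNr opprK. Qed.
Lemma hnB2 x y : hn (x - y) ^+ 2 = hn x ^+ 2 + hn y ^+ 2 - 2 * complex.Re (ip x y).
Proof. by rewrite hnD2 hnN ipNr ReN; ring. Qed.
Lemma hn_par x y : hn (x + y) ^+ 2 <= 2 * hn x ^+ 2 + 2 * hn y ^+ 2.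
Proof.
have := hnB2 x y; have := hnD2 x y; have := sqr_ge0 (hn (x - y)).
move=> h1 h2 h3; lra.
Qed.
Lemma hn_parB x y : hn (x - y) ^+ 2 <= 2 * hn x ^+ 2 + 2 * hn y ^+ 2.
Proof. by have := hn_par x (- y); rewrite hnN. Qed.

Lemma hnZ a x : hn (a *: x) = nc a * hn x.
Proof.
have e : complex.Re (ip (a *: x) (a *: x)) = (nc a * hn x) ^+ 2.
  rewrite ipZl ipZr exprMn nc2 hn2.
  have := Im_ipxx x; case: (ip x x) => r s /= ->.
  case: a => p q /=; ring.
rewrite /hnorm e sqrtr_sqr ger0_norm // mulr_ge0 ?nc_ge0 ?hn_ge0 //.
Qed.

Lemma ncR (r : R) : 0 <= r -> nc (r%:C%C) = r.
Proof. by move=> r0; rewrite /= expr0n addr0 sqrtr_sqr ger0_norm. Qed.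

Lemma ReCS x y : complex.Re (ip x y) <= hn x * hn y.
Proof.
set a := hn y; set b := hn x.
have h := hnB2 (a%:C%C *: x) (b%:C%C *: y).
rewrite !hnZ !ncR ?hn_ge0 // ipZl ipZr in h.
have e : complex.Re (a%:C%C * ((b%:C%C)^*%C * ip x y)) = a * b * complex.Re (ip x y).
  by case: (ip x y) => p q /=; ring.
rewrite e -/a -/b in h.
have h0 := sqr_ge0 (hn (a%:C%C *: x - b%:C%C *: y)).
have a0 : 0 <= a by apply: hn_ge0.
have b0 : 0 <= b by apply: hn_ge0.
have [ab0|] := ltrP 0 (a * b).
  have : 0 <= (a * b) * (a * b - complex.Re (ip x y)).
    have -> : (a * b) * (a * b - complex.Re (ip x y)) =
       (hn (a%:C%C *: x - b%:C%C *: y) ^+ 2) / 2.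
      by rewrite h; field.
    by rewrite divr_ge0.
  rewrite pmulr_rge0 // subr_ge0 mulrC //.
rewrite le_eqVlt => /orP[/eqP|]; last by rewrite ltNge mulr_ge0.
move/eqP; rewrite mulf_eq0 => /orP[/eqP|/eqP] z.
  by have -> := @hn_eq0 y z; rewrite ip0r /= z mulr0.
by have -> := @hn_eq0 x z; rewrite ip0l /= z mul0r.
Qed.

Lemma hn_tri x y : hn (x + y) <= hn x + hn y.
Proof.
have := hnD2 x y; have := ReCS x y; have := hn_ge0 x; have := hn_ge0 y.
have := hn_ge0 (x + y); move=> *; nra.
Qed.

Lemma ncCS x y : nc (ip x y) <= hn x * hn y.
Proof.
have h := ReCS ((ip x y)^*%C *: x) y.
rewrite hnZ ncJ ipZl in h.
have e : complex.Re ((ip x y)^*%C * ip x y) = nc (ip x y) ^+ 2.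
  by rewrite nc2; case: (ip x y) => p q /=; ring.
rewrite e in h.
have [zp|zle] := ltrP 0 (nc (ip x y)).
  by rewrite -(ler_pM2l zp) mulrA -expr2.
by apply: le_trans zle _; rewrite mulr_ge0 ?hn_ge0.
Qed.

Lemma hn_sum (I : eqType) (s : seq I) (P : pred I) (F : I -> V) :
  hn (\sum_(i <- s | P i) F i) <= \sum_(i <- s | P i) hn (F i).
Proof.
apply: (big_ind2 (fun v r => hn v <= r)) => //.
- by rewrite hn0.
- by move=> v1 r1 v2 r2 h1 h2; apply: le_trans (hn_tri _ _) _; apply: lerD.
Qed.


Lemma comb_bound (I : eqType) (s : seq I) (P : pred I) (c : I -> C) (d : I -> V) :
  hn (\sum_(i <- s | P i) c i *: d i) ^+ 2 <=
  (\sum_(i <- s | P i) nc (c i) ^+ 2) * (\sum_(i <- s | P i) hn (d i) ^+ 2).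
Proof.
have h1 : hn (\sum_(i <- s | P i) c i *: d i) <= \sum_(i <- s | P i) nc (c i) * hn (d i).
  apply: le_trans (hn_sum _ _ _ _) _.
  by apply: ler_sum => i _; rewrite hnZ.
apply: le_trans (sq_le (hn_ge0 _) h1) _.
exact: realCS.
Qed.

Lemma sum_widen (N1 N : nat) (P : pred nat) (c : nat -> C) (w : nat -> V) :
  (N1 <= N)%N ->
  \sum_(i < N | P i) (if (i < N1)%N then c i else 0) *: w i =
  \sum_(i < N1 | P i) c i *: w i.
Proof.
move=> h; rewrite [RHS](big_ord_widen_cond N P (fun i => c i *: w i) h) big_mkcondr.
by apply: eq_bigr => i _; case: ifP => _ //; rewrite scale0r.
Qed.

Definition rs_body (w : nat -> V) (P : pred nat) (A B : R) :=
  forall (N : nat) (c : nat -> C),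
    let s2 := \sum_(i < N | P i) nc (c i) ^+ 2 in
    let v := \sum_(i < N | P i) c i *: w i in
    A * s2 <= hn v ^+ 2 /\ hn v ^+ 2 <= B * s2.

Lemma sum_diff (N : nat) (P : pred nat) (c : nat -> C) (w w' : nat -> V) :
  \sum_(i < N | P i) c i *: w i =
  \sum_(i < N | P i) c i *: w' i + \sum_(i < N | P i) c i *: (w i - w' i).
Proof.
rewrite -big_split; apply: eq_bigr => i _ /=.
by rewrite scalerBr addrCA subrr addr0.
Qed.

Lemma s2_ge0 (N : nat) (P : pred nat) (c : nat -> C) :
  0 <= \sum_(i < N | P i) nc (c i) ^+ 2.
Proof. by apply: sumr_ge0 => i _; apply: sqr_ge0. Qed.

Lemma pert_rs (w w' : nat -> V) (P : pred nat) (A B eta : R) :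
  0 < A -> 0 < B -> rs_body w P A B -> 0 <= eta -> 4 * eta <= A ->
  (forall N, \sum_(i < N | P i) hn (w i - w' i) ^+ 2 <= eta) ->
  riesz_seq ip w' P.
Proof.
move=> A0 B0 HR e0 eA Ht.
exists (A / 4), (2 * B + 2 * eta); split; [lra|lra|].
move=> N c /=.
have [h1 h2] := HR N c.
move: h1 h2 => /=.
set s2 := \sum_(i < N | P i) nc (c i) ^+ 2.
have s0 : 0 <= s2 := s2_ge0 N P c.
set v' := \sum_(i < N | P i) c i *: w' i.
set u := \sum_(i < N | P i) c i *: (w i - w' i).
have hu : hn u ^+ 2 <= s2 * eta.
  apply: le_trans (comb_bound _ _ _ _ _) _.
  by apply: ler_wpM2l => //; apply: Ht.
rewrite (sum_diff N P c w w') -/v' -/u => h1 h2.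
have p1 := hn_par v' u.
have p2 := hn_parB (v' + u) u.
rewrite addrK in p2.
have q : s2 * eta * 4 <= A * s2 by nra.
split; nra.
Qed.

Lemma pert_cf (w w' : nat -> V) (P : pred nat) (A eta : R) :
  0 < A -> (forall N (c : nat -> C), A * (\sum_(i < N | P i) nc (c i) ^+ 2)
                   <= hn (\sum_(i < N | P i) c i *: w i) ^+ 2) ->
  0 <= eta -> 16 * eta <= A ->
  (forall N, \sum_(i < N | P i) hn (w i - w' i) ^+ 2 <= eta) ->
  complete_family ip w P -> complete_family ip w' P.
Proof.
move=> A0 HR e0 eA Ht Hc.
have step : forall y, exists N (c : nat -> C),
    hn (y - \sum_(i < N | P i) c i *: w' i) ^+ 2 <= 3 / 4 * hn y ^+ 2.
  move=> y.
  have [y0|yp] := eqVneq (hn y) 0.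
    exists 0%N, (fun _ => 0); rewrite big_ord0 subr0 y0 expr0n /=; lra.
  have hy : 0 < hn y by rewrite lt_def yp hn_ge0.
  have [N [c Hc']] := Hc y (hn y / 3) ltac:(by apply: divr_gt0).
  exists N, c.
  have h1 := HR N c.
  move: Hc' h1.
  set s2 := \sum_(i < N | P i) nc (c i) ^+ 2.
  have s0 : 0 <= s2 := s2_ge0 N P c.
  set v := \sum_(i < N | P i) c i *: w i.
  set v' := \sum_(i < N | P i) c i *: w' i.
  set u := \sum_(i < N | P i) c i *: (w i - w' i).
  have hu : hn u ^+ 2 <= s2 * eta.
    apply: le_trans (comb_bound _ _ _ _ _) _.
    by apply: ler_wpM2l => //; apply: Ht.
  have Ev : v = v' + u by rewrite /v (sum_diff N P c w w').
  move=> hyv hv.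
  have E1 : y - v' = (y - v) + u by rewrite Ev opprD addrA subrK.
  have E2 : v = y - (y - v) by rewrite opprB addrC subrK.
  have p1 := hn_par (y - v) u.
  have p2 := hn_parB y (y - v).
  rewrite -E1 in p1; rewrite -E2 in p2.
  have d2 : hn (y - v) ^+ 2 <= (hn y / 3) ^+ 2.
    by apply: sq_le; [apply: hn_ge0| apply: ltW].
  have q : s2 * eta * 16 <= A * s2 by nra.
  have : (hn y / 3) ^+ 2 = hn y ^+ 2 / 9 by rewrite expr_div_n; congr (_ / _); rewrite -natrX.
  move=> e9; rewrite e9 in d2.
  nra.
move=> x e ep.
have iter : forall k : nat, exists N (c : nat -> C),
    hn (x - \sum_(i < N | P i) c i *: w' i) ^+ 2 <= (3 / 4) ^+ k * hn x ^+ 2.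
  elim=> [|k [N1 [c1 H1]]].
    by exists 0%N, (fun _ => 0); rewrite big_ord0 subr0 expr0 mul1r.
  have [N2 [c2 H2]] := step (x - \sum_(i < N1 | P i) c1 i *: w' i).
  exists (maxn N1 N2), (fun i => (if (i < N1)%N then c1 i else 0) + (if (i < N2)%N then c2 i else 0)).
  have -> : \sum_(i < maxn N1 N2 | P i)
      ((if (i < N1)%N then c1 i else 0) + (if (i < N2)%N then c2 i else 0)) *: w' i =
      \sum_(i < N1 | P i) c1 i *: w' i + \sum_(i < N2 | P i) c2 i *: w' i.
    rewrite -(sum_widen N1 (maxn N1 N2) P c1 w' (leq_maxl N1 N2)) -(sum_widen N2 (maxn N1 N2) P c2 w' (leq_maxr N1 N2)).
    by rewrite -big_split; apply: eq_bigr => i _ /=; rewrite scalerDl.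
  rewrite opprD addrA; apply: le_trans H2 _.
  rewrite [(3 / 4) ^+ k.+1]exprS -[_ * _ * hn x ^+ 2]mulrA; apply: ler_wpM2l => //; lra.
have [k hk] := geo_small (hn x ^+ 2) (e ^+ 2) (sqr_ge0 _) (exprn_gt0 2 ep).
have [N [c Hc']] := iter k.
exists N, c; apply: sq_lt_inv; [exact: hn_ge0|exact: ep|].
exact: le_lt_trans Hc' hk.
Qed.

Lemma nc_parB (a b : C) : nc (a - b) ^+ 2 <= 2 * nc a ^+ 2 + 2 * nc b ^+ 2.
Proof.
rewrite !nc2; case: a b => p q [r t] /=.
have := sqr_ge0 (p + r); have := sqr_ge0 (q + t); move=> *; nra.
Qed.

Lemma ip_pert_bound (x a b : V) :
  nc (ip x b) ^+ 2 <= 2 * nc (ip x a) ^+ 2 + 2 * (hn x ^+ 2 * hn (a - b) ^+ 2).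
Proof.
have e : ip x b = ip x a - ip x (a - b) by rewrite ipBr opprB addrC subrK.
rewrite e; apply: le_trans (nc_parB _ _) _.
apply: lerD => //; apply: ler_wpM2l => //.
rewrite -exprMn; apply: sq_le; [exact: nc_ge0|exact: ncCS].
Qed.

Lemma series_pert (x : V) (f g : nat -> V) (S : R) :
  (\sum_(n <oo) (hn (f n - g n) ^+ 2)%:E = S%:E)%E ->
  (\sum_(n <oo) (nc (ip x (g n)) ^+ 2)%:E <=
    2%:E * \sum_(n <oo) (nc (ip x (f n)) ^+ 2)%:E + (2 * hn x ^+ 2 * S)%:E)%E.
Proof.
move=> hS.
apply: le_trans (_ : _ <= \sum_(n <oo) ((2 * nc (ip x (f n)) ^+ 2)%:E +
           ((2 * hn x ^+ 2) * hn (f n - g n) ^+ 2)%:E))%E _.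
  apply: lee_nneseries.
- by move=> n _ _; rewrite lee_fin sqr_ge0.
- move=> n _; rewrite -EFinD lee_fin -mulrA; exact: ip_pert_bound.
rewrite nneseriesD; last 2 first.
- by move=> n _ _; rewrite lee_fin mulr_ge0 ?sqr_ge0.
- by move=> n _ _; rewrite lee_fin mulr_ge0 ?sqr_ge0 // mulr_ge0 ?sqr_ge0.
rewrite (eq_eseriesr (fun n _ => EFinM 2 _)) (eq_eseriesr (fun n _ => EFinM (2 * hn x ^+ 2) _)).
rewrite nneseriesZl; last by move=> n _; rewrite lee_fin sqr_ge0.
rewrite nneseriesZl; last by move=> n _; rewrite lee_fin sqr_ge0.
by rewrite hS -EFinM.
Qed.

Lemma sum_fg_ge0 (f g : nat -> V) (S : R) :
  (\sum_(n <oo) (hn (f n - g n) ^+ 2)%:E = S%:E)%E -> 0 <= S.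
Proof.
move=> hS; rewrite -lee_fin -hS; apply: nneseries_ge0 => n _ _.
by rewrite lee_fin sqr_ge0.
Qed.

Lemma bessel_pert (f g : nat -> V) (S : R) :
  (\sum_(n <oo) (hn (f n - g n) ^+ 2)%:E = S%:E)%E ->
  bessel ip f -> bessel ip g.
Proof.
move=> hS [B [B0 HB]].
have S0 := sum_fg_ge0 _ _ _ hS.
exists (2 * B + 2 * S); split; first by lra.
move=> x; apply: le_trans (series_pert x _ _ _ hS) _.
have hx := sqr_ge0 (hn x).
apply: le_trans (leeD2r _ (lee_wpmul2l _ (HB x))) _; first by rewrite lee_fin.
by rewrite -EFinM -EFinD lee_fin; nra.
Qed.

Lemma nc0sq : nc 0 ^+ 2 = 0.
Proof. by rewrite nc2 /= expr0n /= addr0. Qed.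

Lemma part1 (f g : nat -> V) (S : R) :
  (\sum_(n <oo) (hn (f n - g n) ^+ 2)%:E = S%:E)%E ->
  pseudo_riesz_seq ip f -> pseudo_riesz_seq ip g.
Proof.
move=> hS [bf [sig [A [B [A0 B0 HR]]]]].
split; first exact: bessel_pert _ _ _ hS bf.
have u0 : forall n, 0 <= hn (f n - g n) ^+ 2 by move=> n; apply: sqr_ge0.
have fin : (\sum_(n <oo) (hn (f n - g n) ^+ 2)%:E < +oo)%E by rewrite hS ltry.
have [M HM] := tail_small u0 fin (A / 4) ltac:(lra).
have HT := tail_fin u0 (HM M (leqnn M)).
exists (sig ++ iota 0 M).
apply: (pert_rs f g (fun n => n \notin sig ++ iota 0 M) A B (A / 4)).
- exact: A0.
- exact: B0.
- move=> N c /=.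
  have := HR N (fun i => if i \notin sig ++ iota 0 M then c i else 0).
  rewrite /= (mask_sum N (fun n => n \notin sig) (fun n => n \notin sig ++ iota 0 M)
     (fun i z => nc z ^+ 2)); last 2 first.
  + by move=> i; rewrite mem_cat negb_or => /andP[].
  + by move=> i; rewrite nc0sq.
  rewrite (mask_sum N (fun n => n \notin sig) (fun n => n \notin sig ++ iota 0 M)
     (fun i z => z *: f i)) //.
  + by move=> i; rewrite mem_cat negb_or => /andP[].
  + by move=> i; rewrite scale0r.
- by apply: divr_ge0; [apply: ltW|].
- by rewrite mulrC divfK.
- move=> N; apply: le_trans (HT N).
  rewrite big_geq_mkord /= [X in _ <= X]big_mkcond [X in X <= _]big_mkcond /=.
  apply: ler_sum => i _.
  case h : ((i : nat) \notin sig ++ iota 0 M); last by case: ifP.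
  move: h; rewrite mem_cat negb_or mem_iota add0n /= => /andP[_].
  by rewrite -leqNgt => ->.
Qed.

Lemma split_series (F : nat -> \bar R) (K : nat) : (forall n, 0 <= F n)%E ->
  (\sum_(n <oo | predT n) F n = (\sum_(0 <= n < K) F n) + \sum_(i <oo) F (i + K)%N)%E.
Proof.
move=> F0; rewrite (nneseries_split_cond 0 K) // add0n; congr (_ + _)%E.
by rewrite nneseries_addn.
Qed.

Lemma split_series0 (F : nat -> \bar R) (K : nat) : (forall n, 0 <= F n)%E ->
  (\sum_(n <oo) F n = (\sum_(0 <= n < K) F n) + \sum_(i <oo) F (i + K)%N)%E.
Proof. exact: split_series. Qed.

Lemma fin_of (x : \bar R) (y : R) : (0 <= x)%E -> (x <= y%:E)%E -> x = (fine x)%:E.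
Proof.
move=> x0 xy; rewrite fineK // ge0_fin_numE //; exact: le_lt_trans xy (ltry _).
Qed.

Lemma series_pert0 (x : V) (f g : nat -> V) :
  (\sum_(n <oo) (nc (ip x (g n)) ^+ 2)%:E <=
    2%:E * \sum_(n <oo) (nc (ip x (f n)) ^+ 2)%:E +
    (2 * hn x ^+ 2)%:E * \sum_(n <oo) (hn (f n - g n) ^+ 2)%:E)%E.
Proof.
apply: le_trans (_ : _ <= \sum_(n <oo) ((2 * nc (ip x (f n)) ^+ 2)%:E +
           ((2 * hn x ^+ 2) * hn (f n - g n) ^+ 2)%:E))%E _.
  apply: lee_nneseries.
- by move=> n _ _; rewrite lee_fin sqr_ge0.
- move=> n _; rewrite -EFinD lee_fin -mulrA; exact: ip_pert_bound.
rewrite nneseriesD; last 2 first.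
- by move=> n _ _; rewrite lee_fin mulr_ge0 ?sqr_ge0.
- by move=> n _ _; rewrite lee_fin mulr_ge0 ?sqr_ge0 // mulr_ge0 ?sqr_ge0.
rewrite (eq_eseriesr (fun n _ => EFinM 2 _)) (eq_eseriesr (fun n _ => EFinM (2 * hn x ^+ 2) _)).
rewrite nneseriesZl; last by move=> n _; rewrite lee_fin sqr_ge0.
by rewrite nneseriesZl; last by move=> n _; rewrite lee_fin sqr_ge0.
Qed.

Lemma part2 (f g : nat -> V) (S : R) :
  (\sum_(n <oo) (hn (f n - g n) ^+ 2)%:E = S%:E)%E ->
  pseudo_frame ip f -> pseudo_frame ip g.
Proof.
move=> hS [bf [hs [A [B [A0 B0 HF]]]]].
have bg := bessel_pert _ _ _ hS bf.
split => //.
have [Bg [Bg0 HBg]] := bg.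
have u0 : forall n, 0 <= hn (f n - g n) ^+ 2 by move=> n; apply: sqr_ge0.
have fin : (\sum_(n <oo) (hn (f n - g n) ^+ 2)%:E < +oo)%E by rewrite hS ltry.
have [M HM] := tail_small u0 fin (A / 4) ltac:(lra).
have HT := HM M (leqnn M).
exists (hs ++ map f (iota 0 M)).
set K := size hs.
set K' := (K + M)%N.
have sK : size (hs ++ map f (iota 0 M)) = K' by rewrite size_cat size_map size_iota.
have eqW : forall n, (n < K')%N -> prepend (hs ++ map f (iota 0 M)) g n = prepend hs f n.
  move=> n hn'; rewrite /prepend sK hn' nth_cat -/K.
  case: (ltnP n K) => // h.
  rewrite (nth_map 0%N); last by rewrite size_iota ltn_subLR.
  by rewrite nth_iota ?add0n // ltn_subLR.
have W'tail : forall i, prepend (hs ++ map f (iota 0 M)) g (i + K')%N = g i.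
  by move=> i; rewrite /prepend sK ltnNge leq_addl /= addnK.
have Wtail : forall i, prepend hs f (i + K')%N = f (i + M)%N.
  move=> i; rewrite /prepend -/K ltnNge (leq_trans (leq_addr M K) (leq_addl _ _)) /=.
  by rewrite /K' addnA addnAC addnK.
set Cst := \sum_(0 <= n < K') hn (prepend hs f n) ^+ 2.
have C0 : 0 <= Cst by apply: sumr_ge0 => n _; apply: sqr_ge0.
exists (A / 4), (Cst + Bg); split; [lra|lra|].
move=> x.
have hx0 := sqr_ge0 (hn x).
set a := \sum_(0 <= n < K') nc (ip x (prepend hs f n)) ^+ 2.
have aC : a <= Cst * hn x ^+ 2.
  rewrite /Cst mulr_suml; apply: ler_sum => n _.
  by rewrite mulrC -exprMn; apply: sq_le; [exact: nc_ge0|exact: ncCS].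
have F0 : forall (w : nat -> V) n, (0 <= (nc (ip x (w n)) ^+ 2)%:E)%E.
  by move=> w n; rewrite lee_fin sqr_ge0.
rewrite (split_series _ K' (F0 _)).
have -> : (\sum_(0 <= n < K') (nc (ip x (prepend (hs ++ map f (iota 0 M)) g n)) ^+ 2)%:E)%E = a%:E.
  rewrite sumEFin /a; congr EFin; apply: eq_big_nat => n /andP[_ hn'].
  by rewrite eqW.
rewrite (eq_eseriesr (fun n _ => congr1 (fun v => (nc (ip x v) ^+ 2)%:E) (W'tail n))).
set G := (\sum_(n <oo) (nc (ip x (g n)) ^+ 2)%:E)%E.
have G0 : (0 <= G)%E by apply: nneseries_ge0 => n _ _.
have GB : (G <= (Bg * hn x ^+ 2)%:E)%E := HBg x.
have eG := fin_of _ _ G0 GB.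
rewrite eG in GB *.
set Gr := fine G in GB *.
rewrite lee_fin in GB.
have [HFl HFu] := HF x.
rewrite (split_series _ K' (F0 _)) in HFl HFu.
have ea : (\sum_(0 <= n < K') (nc (ip x (prepend hs f n)) ^+ 2)%:E)%E = a%:E.
  by rewrite sumEFin.
rewrite ea in HFl HFu.
rewrite (eq_eseriesr (fun n _ => congr1 (fun v => (nc (ip x v) ^+ 2)%:E) (Wtail n))) in HFl HFu.
set b := (\sum_(n <oo) (nc (ip x (f (n + M)%N)) ^+ 2)%:E)%E in HFl HFu.
have b0 : (0 <= b)%E by apply: nneseries_ge0 => n _ _.
have bB : (b <= (B * hn x ^+ 2 - a)%:E)%E.
  by rewrite EFinB leeBrDl.
have eb := fin_of _ _ b0 bB.
rewrite eb in HFl HFu bB.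
set br := fine b in HFl HFu bB.
set Gt := (\sum_(n <oo) (nc (ip x (g (n + M)%N)) ^+ 2)%:E)%E.
have Gt0 : (0 <= Gt)%E by apply: nneseries_ge0 => n _ _.
have GtG : (Gt <= G)%E.
  rewrite /G (split_series0 _ M (F0 _)).
  by apply: leeDr; apply: sume_ge0 => n _.
have GtB : (Gt <= Gr%:E)%E by rewrite /Gr -(fin_of _ _ G0 (HBg x)).
have eGt := fin_of _ _ Gt0 GtB.
rewrite eGt in GtB.
set Gtr := fine Gt in GtB.
rewrite lee_fin in GtB.
have hp := series_pert0 x (fun n => g (n + M)%N) (fun n => f (n + M)%N).
rewrite -/b -/Gt in hp.
have eT : (\sum_(n <oo) (hn (g (n + M)%N - f (n + M)%N) ^+ 2)%:E)%E =
          (\sum_(M <= n <oo) (hn (f n - g n) ^+ 2)%:E)%E.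
  transitivity (\sum_(n <oo) (hn (f (n + M)%N - g (n + M)%N) ^+ 2)%:E)%E.
    by apply: eq_eseriesr => i _; rewrite -opprB hnN.
  by apply: (@nneseries_addn R (fun n => (hn (f n - g n) ^+ 2)%:E) M) => n; rewrite lee_fin.
rewrite eT in hp.
rewrite eb eGt in hp.
have hp2 : (br%:E <= (2 * Gtr + 2 * hn x ^+ 2 * (A / 4))%:E)%E.
  apply: le_trans hp _.
  rewrite -/Gtr.
  have -> : ((2 * Gtr + 2 * hn x ^+ 2 * (A / 4))%:E =
     2%:E * Gtr%:E + (2 * hn x ^+ 2)%:E * (A / 4)%:E)%E by rewrite -!EFinM -EFinD.
  apply: leeD2l; apply: lee_wpmul2l => //; rewrite lee_fin; nra.
rewrite lee_fin in hp2.
rewrite -EFinD lee_fin in HFl.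
have a0 : 0 <= a by apply: sumr_ge0 => n _; apply: sqr_ge0.
have Gtr0 : 0 <= Gtr by rewrite -lee_fin -eGt.
split; rewrite -EFinD lee_fin.
  nra.
rewrite mulrDl; lra.
Qed.

Lemma ord_to_seq (T : zmodType) (N : nat) (P : pred nat) (F : nat -> T) :
  \sum_(i < N | P i) F i = \sum_(i <- [seq i <- iota 0 N | P i]) F i.
Proof. by rewrite big_filter -big_mkord /index_iota subn0. Qed.

Lemma seq_to_ord (T : zmodType) (s : seq nat) (P : pred nat) (F : nat -> T) :
  uniq s -> all P s ->
  \sum_(i <- s) F i = \sum_(i < (\max_(j <- s) j).+1 | P i) (if (i : nat) \in s then F i else 0).
Proof.
move=> us /allP aP.
rewrite (ord_to_seq _ _ _ (fun i => if i \in s then F i else 0)) -big_mkcond -[RHS]big_filter.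
apply: perm_big; apply: uniq_perm => //.
  by apply: filter_uniq; apply: filter_uniq; apply: iota_uniq.
move=> i; rewrite !mem_filter mem_iota add0n.
case hi : (i \in s); rewrite ?andbF //=.
have hm : (i <= \max_(j <- s) j)%N by exact: (@leq_bigmax_seq _ s xpredT (fun j => j) i hi).
by rewrite aP // ltnS hm.
Qed.

Lemma reindex_rb (w w' : nat -> V) (P P' : pred nat) (phi psi : nat -> nat) (A B : R) :
  (forall n, P' n -> [/\ P (phi n), psi (phi n) = n & w' n = w (phi n)]) ->
  (forall j, P j -> P' (psi j) /\ phi (psi j) = j) ->
  rs_body w P A B -> complete_family ip w P ->
  rs_body w' P' A B /\ complete_family ip w' P'.
Proof.
move=> H1 H2 HR HC; split.
  move=> N c /=.
  set s' := [seq i <- iota 0 N | P' i].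
  set s := map phi s'.
  have Ps' : forall i, i \in s' -> P' i by move=> i; rewrite mem_filter => /andP[].
  have us : uniq s.
    rewrite map_inj_in_uniq; first by apply: filter_uniq; apply: iota_uniq.
    move=> i j si sj e.
    have [_ h1 _] := H1 _ (Ps' _ si); have [_ h2 _] := H1 _ (Ps' _ sj).
    by rewrite -h1 e h2.
  have aP : all P s.
    by apply/allP => j /mapP[i si ->]; have [] := H1 _ (Ps' _ si).
  set d := fun j => c (psi j).
  have e1 : \sum_(i < N | P' i) c i *: w' i = \sum_(j <- s) d j *: w j.
    rewrite (ord_to_seq _ _ _ (fun i => c i *: w' i)) -/s' /s big_map; apply: eq_big_seq => i si.
    by have [_ h1 h2] := H1 _ (Ps' _ si); rewrite /d h1 h2.
  have e2 : \sum_(i < N | P' i) nc (c i) ^+ 2 = \sum_(j <- s) nc (d j) ^+ 2.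
    rewrite (ord_to_seq _ _ _ (fun i => nc (c i) ^+ 2)) -/s' /s big_map; apply: eq_big_seq => i si.
    by have [_ h1 h2] := H1 _ (Ps' _ si); rewrite /d h1.
  set N2 := (\max_(j <- s) j).+1.
  set c2 := fun j => if j \in s then d j else 0.
  have e3 : \sum_(j <- s) d j *: w j = \sum_(i < N2 | P i) c2 i *: w i.
    rewrite (seq_to_ord _ _ _ (fun j => d j *: w j) us aP); apply: eq_bigr => i _.
    by rewrite /c2; case: ifP => _ //; rewrite scale0r.
  have e4 : \sum_(j <- s) nc (d j) ^+ 2 = \sum_(i < N2 | P i) nc (c2 i) ^+ 2.
    rewrite (seq_to_ord _ _ _ (fun j => nc (d j) ^+ 2) us aP); apply: eq_bigr => i _.
    by rewrite /c2; case: ifP => _ //; rewrite nc0sq.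
  rewrite e1 e2 e3 e4; exact: (HR N2 c2).
move=> x e ep.
have [N [c Hc]] := HC x e ep.
set s := [seq i <- iota 0 N | P i].
have Ps : forall i, i \in s -> P i by move=> i; rewrite mem_filter => /andP[].
set s' := map psi s.
have us : uniq s'.
  rewrite map_inj_in_uniq; first by apply: filter_uniq; apply: iota_uniq.
  move=> i j si sj e'.
  have [_ h1] := H2 _ (Ps _ si); have [_ h2] := H2 _ (Ps _ sj).
  by rewrite -h1 e' h2.
have aP : all P' s'.
  by apply/allP => j /mapP[i si ->]; have [] := H2 _ (Ps _ si).
have e1 : \sum_(i < N | P i) c i *: w i = \sum_(j <- s') c (phi j) *: w' j.
  rewrite (ord_to_seq _ _ _ (fun i => c i *: w i)) -/s /s' big_map; apply: eq_big_seq => i si.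
  have [h1 h2] := H2 _ (Ps _ si).
  by have [_ _ h3] := H1 _ h1; rewrite h3 h2.
rewrite e1 (seq_to_ord _ _ _ (fun j => c (phi j) *: w' j) us aP) in Hc.
exists (\max_(j <- s') j).+1, (fun j => if j \in s' then c (phi j) else 0).
suff -> : \sum_(i < (\max_(j <- s') j).+1 | P' i) (if (i : nat) \in s' then c (phi i) else 0) *: w' i =
   \sum_(i < (\max_(j <- s') j).+1 | P' i) (if (i : nat) \in s' then c (phi i) *: w' i else 0) by [].
by apply: eq_bigr => i _; case: ifP => _ //; rewrite scale0r.
Qed.

Lemma part3 (f g : nat -> V) (S : R) :
  (\sum_(n <oo) (hn (f n - g n) ^+ 2)%:E = S%:E)%E ->
  pseudo_riesz_basis ip f -> pseudo_riesz_basis ip g.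
Proof.
move=> hS [bf [sig [hs [[A [B [A0 B0 HR]]] HC]]]].
split; first exact: bessel_pert _ _ _ hS bf.
have u0 : forall n, 0 <= hn (f n - g n) ^+ 2 by move=> n; apply: sqr_ge0.
have fin : (\sum_(n <oo) (hn (f n - g n) ^+ 2)%:E < +oo)%E by rewrite hS ltry.
have [M0 HM] := tail_small u0 fin (A / 16) ltac:(lra).
set K := size hs.
set mx := \max_(m <- sig) m.
set M := (M0 + mx).+1.
have sigM : forall m, m \in sig -> (m < M)%N.
  move=> m ms; have h : (m <= mx)%N by exact: (@leq_bigmax_seq _ sig xpredT (fun j => j) m ms erefl).
  rewrite /M; lia.
have M0M : (M0 <= M)%N by rewrite /M; lia.
have HT := tail_fin u0 (HM M M0M).
set r := [seq m <- iota 0 M | m \notin sig].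
have ur : uniq r by apply: filter_uniq; apply: iota_uniq.
have mem_r : forall m, (m \in r) = (m < M)%N && (m \notin sig).
  by move=> m; rewrite mem_filter mem_iota add0n andbC.
set hs' := hs ++ map f r.
set K' := (K + size r)%N.
have sK : size hs' = K' by rewrite size_cat size_map.
set phi := fun n => if (n < K)%N then n else if (n < K')%N then (K + nth 0%N r (n - K))%N
                    else (n - K' + K)%N.
set psi := fun j => if (j < K)%N then j else if (j - K < M)%N then (K + index (j - K) r)%N
                    else (j - K + K')%N.
set P := fun n => (n < size hs)%N || ((n - size hs)%N \notin sig).
set P' := fun n => (n < size hs')%N || ((n - size hs')%N \notin iota 0 M).
have KK' : (K <= K')%N by rewrite /K'; lia.
have H1 : forall n, P' n -> [/\ P (phi n), psi (phi n) = n & prepend hs' f n = prepend hs f (phi n)].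
  move=> n; rewrite /P' /P /prepend sK -/K => hP'.
  case: (ltnP n K) => hnK.
    have hnK2 : (n < K')%N by lia.
    by rewrite /phi /psi hnK hnK2 nth_cat -/K hnK.
  case: (ltnP n K') => hnK'.
    have hk : (n - K < size r)%N by rewrite /K' in hnK'; lia.
    set m := nth 0%N r (n - K).
    have mr : m \in r by apply: mem_nth.
    move: (mr); rewrite mem_r => /andP[mM msig].
    have ephi : phi n = (K + m)%N by rewrite /phi ltnNge hnK /= hnK'.
    rewrite ephi.
    have h1 : (K + m < K)%N = false by lia.
    have h2 : (K + m - K = m)%N by lia.
    rewrite h1 h2 /= msig; split => //.
      by rewrite /psi h1 h2 mM index_uniq //; lia.
    rewrite nth_cat -/K ltnNge hnK /= (nth_map 0%N) //.
  have hM : (M <= n - K')%N.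
    move: hP'; case: (ltnP n K') => //; first by lia.
    by move=> _; rewrite orFb mem_iota add0n leq0n andTb -leqNgt.
  have ephi : phi n = (n - K' + K)%N by rewrite /phi ltnNge hnK /= ltnNge hnK'.
  rewrite ephi.
  have h1 : (n - K' + K < K)%N = false by lia.
  have h2 : (n - K' + K - K = n - K')%N by lia.
  have nsig : (n - K')%N \notin sig.
    by apply/negP => /sigM; lia.
  rewrite h1 h2 /= nsig; split => //.
  rewrite /psi h1 h2.
  have h3 : (n - K' < M)%N = false by lia.
  rewrite h3; lia.
have H2 : forall j, P j -> P' (psi j) /\ phi (psi j) = j.
  move=> j; rewrite /P /P' sK -/K => hPj.
  case: (ltnP j K) => hjK.
    have hjK2 : (j < K')%N by lia.
    rewrite /psi /phi hjK /=; split; [by rewrite hjK2 | by rewrite hjK].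
  have jsig : (j - K)%N \notin sig by move: hPj; rewrite ltnNge hjK.
  have psi1 : (j < K)%N = false by lia.
  case: (ltnP (j - K) M) => hjM.
    have mr : (j - K)%N \in r by rewrite mem_r hjM jsig.
    have hidx : (index (j - K) r < size r)%N by rewrite index_mem.
    have epsi : psi j = (K + index (j - K) r)%N by rewrite /psi psi1 hjM.
    rewrite epsi.
    have h1 : (K + index (j - K) r < K')%N by rewrite /K'; lia.
    have h2 : (K + index (j - K) r < K)%N = false by lia.
    have h3 : (K + index (j - K) r - K = index (j - K) r)%N by lia.
    rewrite h1 /=; split => //.
    rewrite /phi h2 h1 h3 nth_index //; lia.
  have epsi : psi j = (j - K + K')%N.
    by rewrite /psi psi1; have -> : (j - K < M)%N = false by lia.
  rewrite epsi.
  have h1 : (j - K + K' < K')%N = false by lia.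
  have h2 : (j - K + K' - K' = j - K)%N by lia.
  rewrite h1 h2 orFb mem_iota add0n leq0n andTb -leqNgt hjM; split => //.
  have h4 : (j - K + K' < K)%N = false by lia.
  rewrite /phi h4 h1; lia.
have [HR'' HC''] := reindex_rb _ _ _ _ _ _ _ _ H1 H2 HR HC.
have Ht : forall N, \sum_(i < N | P' i) hn (prepend hs' f i - prepend hs' g i) ^+ 2 <= A / 16.
  move=> N.
  set F := fun i => hn (prepend hs' f i - prepend hs' g i) ^+ 2.
  have F0 : forall i, (i < K')%N -> F i = 0.
    by move=> i hi; rewrite /F /prepend sK hi subrr hn0 expr0n.
  have Fs : forall j, F (j + K')%N = hn (f j - g j) ^+ 2.
    by move=> j; rewrite /F /prepend sK ltnNge leq_addl /= addnK.
  apply: le_trans (HT (N - K')%N).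
  have e1 : \sum_(M <= j < N - K') hn (f j - g j) ^+ 2 = \sum_(M + K' <= i < N) F i.
    by rewrite big_addn; apply: eq_bigr => j _; rewrite Fs.
  have e2 : \sum_(M + K' <= i < N) F i = \sum_(i < N | true && (M + K' <= i)%N) F i.
    by rewrite big_geq_mkord.
  rewrite e1 e2 [X in X <= _]big_mkcond [X in _ <= X]big_mkcond.
  apply: ler_sum => i _.
  case: (leqP (M + K') i) => hi.
    by rewrite andTb; case: ifP => _ //; rewrite /F sqr_ge0.
  rewrite andbF.
  case hP : (P' i) => //.
  suff hiK : (i < K')%N by have := F0 i hiK; rewrite /F => ->.
  move: hP; rewrite /P' sK; case: (ltnP i K') => // hiK.
  by rewrite orFb mem_iota add0n leq0n andTb -leqNgt => h; lia.
exists (iota 0 M), hs'; split.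
  apply: (pert_rs (prepend hs' f) (prepend hs' g) P' A B (A / 16)) => //.
  - by apply: divr_ge0; [apply: ltW|].
  - lra.
apply: (pert_cf (prepend hs' f) (prepend hs' g) P' A (A / 16)) => //.
- by move=> N c; have [] := HR'' N c.
- by apply: divr_ge0; [apply: ltW|].
- lra.
Qed.
End Basics.

Theorem mainTheorem11 (R : realType) (V : lmodType R[i]) (ip : V -> V -> R[i])
  (HV : separable_hilbert ip) (f g : nat -> V) :
  (\sum_(n <oo) ((hnorm ip (f n - g n)) ^+ 2)%:E < gamma_f ip f * gamma_f ip f)%E ->
  [/\ (pseudo_riesz_seq ip f -> pseudo_riesz_seq ip g),
      (pseudo_frame ip f -> pseudo_frame ip g)
    & (pseudo_riesz_basis ip f -> pseudo_riesz_basis ip g)].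
Proof.
move=> H.
have [[ipl ipc ipp ipd _] _] := HV.
set Sm := (\sum_(n <oo) ((hnorm ip (f n - g n)) ^+ 2)%:E)%E in H.
have fin : (Sm < +oo)%E by exact: lt_le_trans H (leey _).
have S0 : (0 <= Sm)%E by apply: nneseries_ge0 => n _ _; rewrite lee_fin sqr_ge0.
have eS : Sm = (fine Sm)%:E by rewrite fineK // ge0_fin_numE.
split.
- exact: (part1 R V ip ipl ipc ipp ipd f g (fine Sm) eS).
- exact: (part2 R V ip ipl ipc ipp ipd f g (fine Sm) eS).
- exact: (part3 R V ip ipl ipc ipp ipd f g (fine Sm) eS).
Qed.
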